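(* Let $\lambda\in X^+$ be a $p$-core. Then $$\sum_{(\alpha,l)}\nu_p(lp)\,\chi(s_{\alpha,l}\cdot\lambda)=\sum_{(\alpha,l)\in R(\lambda)}\nu_p(lp)\,\chi(s_{\alpha,l}\cdot\lambda),$$ where the left sum runs over all pairs $(\alpha,l)$ with $\alpha$ a positive root, $l$ an integer $\ge1$ and $\langle\lambda+\rho,\alpha^\vee\rangle-lp>0$, and $\nu_p$ is the $p$-adic valuation. (The left side is the right-hand side of Jantzen's sum formula for $\sum_{i>0}\mathrm{ch}\,\Delta(\lambda)^i$.)
   Context: Setup: $p>2$ is a prime, $m\ge1$, $G=\mathrm{Sp}_{2m}$ over an algebraically closed field of characteristic $p$, with diagonal maximal torus and weight lattice $X=\mathbb Z^m$ (standard basis $\varepsilon_1,\dots,\varepsilon_m$). Positive roots: $\varepsilon_i\pm\varepsilon_j$ ($1\le i<j\le m$) and $2\varepsilon_i$ ($1\le i\le m$). With the standard inner product, $\alpha^\vee=2\alpha/\langle\alpha,\alpha\rangle$, so $(\varepsilon_i\pm\varepsilon_j)^\vee=\varepsilon_i\pm\varepsilon_j$ and $(2\varepsilon_i)^\vee=\varepsilon_i$. $X^+=\{\lambda\in\mathbb Z^m:\lambda_1\ge\dots\ge\lambda_m\ge0\}$, identified with partitions with at most $m$ parts; $l(\lambda)$ is the number of nonzero parts. $\rho=(m,m-1,\dots,1)$. For a root $\alpha$ and $l\in\mathbb Z$, $s_{\alpha,l}(x)=x-(\langle x,\alpha^\vee\rangle-lp)\alpha$ and $w\cdot x=w(x+\rho)-\rho$.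 For $\mu\in X$, $\chi(\mu)\in\mathbb Z[X]$ is the Weyl character; $\chi(\mu)=0$ iff some entry of $\mu+\rho$ is $0$ or two entries of $\mu+\rho$ are equal up to sign, and otherwise $\chi(\mu)=\det(w)\chi(w\cdot\mu)$ for the unique signed permutation $w$ with $w\cdot\mu$ dominant. A $p$-core is $\lambda\in X^+$ such that for all $i\in\{1,\dots,m\}$ and all integers $l\ge1$ with $(\lambda+\rho)_i-lp>0$, the number $(\lambda+\rho)_i-lp$ occurs as an entry of $\lambda+\rho$. $R(\lambda)$ is the set of pairs $(\alpha,l)$ with $\alpha=\varepsilon_i+\varepsilon_j$, $1\le i<j\le l(\lambda)$, $l\ge1$ an integer, $a:=\langle\lambda+\rho,\alpha^\vee\rangle-lp\ge1$, $(\lambda+\rho)_j-a>0$ and $\chi(s_{\alpha,l}\cdot\lambda)\ne0$. *)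

(* Defs.v *)
(* Weights of Sp_{2m} are sequences of integers of length m
   (0-based indices: entry k is the coefficient of eps_{k+1}). *)
From mathcomp Require Import all_boot all_order all_algebra.
Set Implicit Arguments. Unset Strict Implicit. Unset Printing Implicit Defensive.
Import Order.TTheory GRing.Theory Num.Theory.
Local Open Scope ring_scope.

Definition weight := seq int.

Definition addw (x y : weight) : weight := [seq a.1 + a.2 | a <- zip x y].
Definition subw (x y : weight) : weight := [seq a.1 - a.2 | a <- zip x y].

Definition rho (m : nat) : weight := [seq ((m - k)%N)%:Z | k <- iota 0 m].

(* positive roots: eps_i - eps_j, eps_i + eps_j (i<j), 2 eps_i  (0-based) *)
Inductive posroot := RMinus of nat & nat | RPlus of nat & nat | RLong of nat.

Definition posroots (m : nat) : seq posroot :=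
  [seq RMinus i j | i <- iota 0 m, j <- [seq j <- iota 0 m | (i < j)%N]] ++
  [seq RPlus i j | i <- iota 0 m, j <- [seq j <- iota 0 m | (i < j)%N]] ++
  [seq RLong i | i <- iota 0 m].

Definition rootv (m : nat) (a : posroot) : weight :=
  match a with
  | RMinus i j => mkseq (fun k => (k == i)%:Z - (k == j)%:Z) m
  | RPlus i j => mkseq (fun k => (k == i)%:Z + (k == j)%:Z) m
  | RLong i => mkseq (fun k => 2 * (k == i)%:Z) m
  end.

(* <x, alpha^vee> *)
Definition pairc (a : posroot) (x : weight) : int :=
  match a with
  | RMinus i j => nth 0 x i - nth 0 x j
  | RPlus i j => nth 0 x i + nth 0 x j
  | RLong i => nth 0 x i
  end.

Definition sref (m p : nat) (a : posroot) (l : nat) (x : weight) : weight :=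
  subw x [seq (pairc a x - (l * p)%N%:Z) * c | c <- rootv m a].

Definition dot (m : nat) (w : weight -> weight) (x : weight) : weight :=
  subw (w (addw x (rho m))) (rho m).

(* ---- Weyl characters ----
   chi(mu) is represented in the Z-basis {chi(lam) : lam dominant} of the
   span of the Weyl characters: a character is its coefficient function on
   dominant weights. *)
Definition character := weight -> int.

Definition chi_vanish (m : nat) (mu : weight) : bool :=
  let v := addw mu (rho m) in (0 \in v) || ~~ uniq (map absz v).

(* the dominant weight w.mu, for the signed permutation w sorting |mu+rho| *)
Definition domrep (m : nat) (mu : weight) : weight :=
  let v := addw mu (rho m) in
  subw (map Posz (sort geq (map absz v))) (rho m).

(* det(w) = sign of the permutation part times the product of the signs *)
Definition detw (m : nat) (mu : weight) : int :=
  let v := addw mu (rho m) in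
  (-1) ^+ (count (fun x : int => (x < 0)%R) v +
           \sum_(i < m) \sum_(j < m)
              ((i < j)%N && (absz (nth 0%R v i) < absz (nth 0%R v j))%N))%N.

Definition chi (m : nat) (mu : weight) : character :=
  fun nu => if chi_vanish m mu then 0
            else if domrep m mu == nu then detw m mu else 0.

Definition dominant (m : nat) (lam : weight) : bool :=
  [&& size lam == m, sorted (fun x y : int => y <= x) lam & all (fun x => 0 <= x) lam].

Definition len (lam : weight) : nat := count (fun x : int => x != 0) lam.

Definition pcore (m p : nat) (lam : weight) : Prop :=
  dominant m lam /\
  forall (i l : nat), (i < m)%N -> (1 <= l)%N ->
    let v := addw lam (rho m) in
    0 < nth 0 v i - (l * p)%N%:Z -> (nth 0 v i - (l * p)%N%:Z) \in v.

(* The range 1 <= l <= |<lam+rho,alpha^vee>| contains all such l. *)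
Definition jsum (m p : nat) (P : posroot -> nat -> bool) (lam : weight) : character :=
  fun nu =>
    \sum_(a <- posroots m)
      \sum_(1 <= l < (absz (pairc a (addw lam (rho m)))).+1
            | (0 < pairc a (addw lam (rho m)) - (l * p)%N%:Z) && P a l)
        (logn p (l * p))%:Z * chi m (dot m (sref m p a l) lam) nu.

Definition inR (m p : nat) (lam : weight) (a : posroot) (l : nat) : bool :=
  match a with
  | RPlus i j =>
      let v := addw lam (rho m) in
      let aa := pairc a v - (l * p)%N%:Z in
      [&& (i < j)%N, (j < len lam)%N, (1 <= l)%N, 1 <= aa,
          0 < nth 0 v j - aa & ~~ chi_vanish m (dot m (sref m p a l) lam)]
  | _ => false
  end.

(* Main.v *)
Require Import Defs.
From mathcomp Require Import all_boot all_order all_algebra.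
From mathcomp Require Import zify.
From Stdlib Require Import FunctionalExtensionality.
Import Order.TTheory GRing.Theory Num.Theory.
Local Open Scope ring_scope.
Set Implicit Arguments. Unset Strict Implicit.
#[global] Instance Op_int_add2 : ZifyClasses.BinOp (@GRing.add (Algebra_BaseAddUMagma__to__Algebra_BaseAddMagma ssrint.ssrint_int__canonical__Algebra_BaseAddUMagma)) := zify_algebra.AlgebraZifyInstances.Op_addz.
Add Zify BinOp Op_int_add2.

Lemma size_subw x y : size (subw x y) = minn (size x) (size y).
Proof. by rewrite /subw size_map size_zip. Qed.
Lemma size_addw x y : size (addw x y) = minn (size x) (size y).
Proof. by rewrite /addw size_map size_zip. Qed.

Lemma nth_subw x y q : (q < size x)%N -> (q < size y)%N ->
  nth 0 (subw x y) q = nth 0 x q - nth 0 y q.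
Proof.
elim: x y q => [|a x IH] [|b y] [|q] //= H1 H2; exact: IH.
Qed.
Lemma nth_addw x y q : (q < size x)%N -> (q < size y)%N ->
  nth 0 (addw x y) q = nth 0 x q + nth 0 y q.
Proof.
elim: x y q => [|a x IH] [|b y] [|q] //= H1 H2; exact: IH.
Qed.

Lemma addw_subw w r : size w = size r -> addw (subw w r) r = w.
Proof.
elim: w r => [|a w IH] [|b r] //= [H]; rewrite /addw /subw /=.
by rewrite subrK; congr cons; apply: IH.
Qed.

Lemma size_rho m : size (rho m) = m.
Proof. by rewrite /rho size_map size_iota. Qed.
Lemma nth_rho m q : (q < m)%N -> nth 0 (rho m) q = (m - q)%:Z.
Proof. by move=> H; rewrite /rho (nth_map 0%N) ?size_iota // nth_iota. Qed.

Lemma size_rootv m a : size (rootv m a) = m.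
Proof. by case: a => *; rewrite size_mkseq. Qed.

Lemma size_sref m p a l x : size x = m -> size (sref m p a l x) = m.
Proof. by move=> H; rewrite /sref size_subw size_map size_rootv H minnn. Qed.

Lemma nth_sref m p a l x q : size x = m -> (q < m)%N ->
  nth 0 (sref m p a l x) q = nth 0 x q - (pairc a x - (l * p)%N%:Z) * nth 0 (rootv m a) q.
Proof.
move=> H Hq; rewrite /sref nth_subw ?H ?size_map ?size_rootv //.
by rewrite (nth_map 0) ?size_rootv.
Qed.

Lemma test (a b : int) (n k : nat) : (k < n)%N -> a < b -> a + k%:Z < b + n%:Z.
Proof. lia. Qed.

Definition vanv (w : weight) : bool := (0 \in w) || ~~ uniq (map absz w).
Definition detv (m : nat) (v : weight) : int :=
  (-1) ^+ (count (fun x : int => (x < 0)%R) v +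
           \sum_(i < m) \sum_(j < m)
              ((i < j)%N && (absz (nth 0%R v i) < absz (nth 0%R v j))%N))%N.
Definition chiv (m : nat) (w : weight) : character :=
  fun nu => if vanv w then 0
            else if subw (map Posz (sort geq (map absz w))) (rho m) == nu then detv m w else 0.

Lemma chiE m mu nu : chi m mu nu = chiv m (addw mu (rho m)) nu.
Proof. by []. Qed.
Lemma vanE m mu : chi_vanish m mu = vanv (addw mu (rho m)).
Proof. by []. Qed.

Lemma vanv_rep w q1 q2 : (q1 < size w)%N -> (q2 < size w)%N -> q1 != q2 ->
  absz (nth 0 w q1) = absz (nth 0 w q2) -> vanv w.
Proof.
move=> h1 h2 ne e; apply/orP; right; apply/negP => U.
move: (nth_uniq 0%N (s:=map absz w) (i:=q1) (j:=q2)).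
rewrite !size_map !(nth_map 0) // e eqxx => /(_ h1 h2 U) /esym.
by rewrite (negbTE ne).
Qed.

Lemma vanv_zero w q : (q < size w)%N -> nth 0 w q = 0 -> vanv w.
Proof. by move=> h e; apply/orP; left; rewrite -e mem_nth. Qed.

Lemma mem0_absz (s : seq int) : (0 \in s) = (0%N \in map absz s).
Proof.
elim: s => [|x s IH] //=; rewrite !in_cons IH; congr orb.
by rewrite [in RHS]eq_sym absz_eq0 eq_sym.
Qed.

Lemma count_neg (s t : seq int) k : size s = size t -> (k < size s)%N ->
  (forall q, q != k -> nth 0 s q = nth 0 t q) -> nth 0 s k < 0 -> 0 <= nth 0 t k ->
  count (fun x : int => x < 0) s = (count (fun x : int => x < 0) t).+1.
Proof.
elim: s t k => [|x s IH] [|y t] [|k] //= [Hs] Hk Heq Hn Hp.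
- have -> : s = t.
    apply: (@eq_from_nth _ 0) => // q _; exact: (Heq q.+1).
  by rewrite Hn ltNge Hp.
- have -> : x = y by exact: (Heq 0%N).
  rewrite (IH t k) // ?addnS // => q ne; exact: (Heq q.+1).
Qed.

Lemma chiv_neg m w w' k nu : size w = m -> size w' = m -> (k < m)%N ->
  nth 0 w k = - nth 0 w' k -> 0 < nth 0 w' k ->
  (forall q, q != k -> nth 0 w q = nth 0 w' q) ->
  chiv m w nu = - chiv m w' nu.
Proof.
move=> s1 s2 hk ek pk eq.
have ea : forall q, absz (nth 0 w q) = absz (nth 0 w' q).
  move=> q; case: (eqVneq q k) => [->|ne]; last by rewrite eq.
  by rewrite ek abszN.
have em : map absz w = map absz w'.
  apply: (@eq_from_nth _ 0%N); rewrite ?size_map ?s1 ?s2 // => q hq.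
  by rewrite !(nth_map 0) ?s1 ?s2 // -s1.
rewrite /chiv /vanv !mem0_absz em.
case: ifP => _; first by rewrite oppr0.
case: ifP => _; last by rewrite oppr0.
rewrite /detv (@count_neg w w' k) ?s1 ?s2 // ?ek ?oppr_lt0 ?ltW //.
rewrite addSn exprS mulN1r; congr (- (_ ^+ (_ + _))).
by apply: eq_bigr => i _; apply: eq_bigr => j _; rewrite !ea.
Qed.


Lemma dom_size m lam : dominant m lam -> size lam = m.
Proof. by case/and3P => /eqP. Qed.

Lemma dom_nonneg m lam q : dominant m lam -> 0 <= nth 0 lam q.
Proof.
case/and3P => _ _ /allP H; case: (ltnP q (size lam)) => hq.
  by apply: H; rewrite mem_nth.
by rewrite nth_default.
Qed.

Lemma dom_le m lam q r : dominant m lam -> (q <= r)%N -> (r < m)%N ->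
  nth 0 lam r <= nth 0 lam q.
Proof.
case/and3P => /eqP sz so _ hqr hr.
have tr : transitive (fun x y : int => y <= x).
  by move=> a b c h1 h2; apply: le_trans h2 h1.
have rf : reflexive (fun x y : int => y <= x) by move=> a; exact: lexx.
apply: (sorted_leq_nth tr rf 0 so) => //; rewrite inE sz //; lia.
Qed.

Lemma nth_v m lam q : dominant m lam -> (q < m)%N ->
  nth 0 (addw lam (rho m)) q = nth 0 lam q + (m - q)%:Z.
Proof.
move=> d hq; have e := nth_rho hq; rewrite nth_addw ?e // ?size_rho ?(dom_size d) //.
Qed.

Lemma size_v m lam : dominant m lam -> size (addw lam (rho m)) = m.
Proof. by move=> d; rewrite size_addw size_rho (dom_size d) minnn. Qed.

Lemma v_pos m lam q : dominant m lam -> (q < m)%N -> 0 < nth 0 (addw lam (rho m)) q.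
Proof. move=> d hq; rewrite nth_v //; have := dom_nonneg q d; lia. Qed.

Lemma v_dec m lam q r : dominant m lam -> (q < r)%N -> (r < m)%N ->
  nth 0 (addw lam (rho m)) r < nth 0 (addw lam (rho m)) q.
Proof.
move=> d hqr hr; rewrite !nth_v //; last lia.
have := dom_le d (ltnW hqr) hr; lia.
Qed.

Lemma v_inj m lam q r : dominant m lam -> (q < m)%N -> (r < m)%N ->
  nth 0 (addw lam (rho m)) q = nth 0 (addw lam (rho m)) r -> q = r.
Proof.
move=> d hq hr e; case: (ltngtP q r) => // h.
  by have := v_dec d h hr; rewrite e ltxx.
by have := v_dec d h hq; rewrite e ltxx.
Qed.

Lemma v_lt_idx m lam q r : dominant m lam -> (q < m)%N -> (r < m)%N ->
  nth 0 (addw lam (rho m)) r < nth 0 (addw lam (rho m)) q -> (q < r)%N.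
Proof.
move=> d hq hr e; case: (ltngtP q r) => // h.
  by have := v_dec d h hq; rewrite ltNge (ltW e).
by move: e; rewrite h ltxx.
Qed.

Lemma len_tail m lam j q : dominant m lam -> (j < m)%N -> ~~ (j < len lam)%N ->
  (j <= q)%N -> (q < m)%N -> nth 0 (addw lam (rho m)) q = (m - q)%:Z.
Proof.
move=> d hj hl hjq hq; rewrite nth_v //.
suff lj : nth 0 lam j = 0.
  have := dom_le d hjq hq; have := dom_nonneg q d; lia.
apply/eqP; apply/negPn/negP => nz; move/negP: hl; apply.
have sz := dom_size d.
rewrite /len -(cat_take_drop j.+1 lam) count_cat.
have : all (fun x : int => x != 0) (take j.+1 lam).
  apply/(all_nthP 0) => r; rewrite size_take sz => hr.
  have hrj : (r <= j)%N by move: hr; case: ifP; lia.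
  rewrite nth_take; last lia.
  have := dom_le d hrj hj; have := dom_nonneg j d; move: nz; lia.
rewrite all_count size_take sz; case: ifP => [hjm|]; last lia.
move/eqP => ->; lia.
Qed.

Notation V m lam := (addw lam (rho m)).

Definition Fv m p lam (nu : weight) a l :=
  (logn p (l * p))%:Z * chi m (dot m (sref m p a l) lam) nu.
Definition Gv m p lam (nu : weight) a l :=
  if (0 < pairc a (V m lam) - (l * p)%N%:Z) && ~~ inR m p lam a l
  then Fv m p lam nu a l else 0.

Lemma dot_eq m p lam a l : dominant m lam ->
  addw (dot m (sref m p a l) lam) (rho m) = sref m p a l (V m lam).
Proof.
move=> d; rewrite /dot addw_subw // size_sref ?size_rho // size_v //.
Qed.

Lemma F_van m p lam nu a l : dominant m lam -> vanv (sref m p a l (V m lam)) ->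
  Fv m p lam nu a l = 0.
Proof. by move=> d h; rewrite /Fv chiE dot_eq // /chiv h mulr0. Qed.

Lemma core_idx m p lam i l : pcore m p lam -> (i < m)%N -> (1 <= l)%N ->
  0 < nth 0 (V m lam) i - (l * p)%N%:Z ->
  exists k, (k < m)%N /\ nth 0 (V m lam) k = nth 0 (V m lam) i - (l * p)%N%:Z.
Proof.
case=> d pc hi hl hp; have := pc i l hi hl hp => /= hm.
exists (index (nth 0 (V m lam) i - (l * p)%N%:Z) (V m lam)); split.
  by rewrite -[X in (_ < X)%N](size_v d) index_mem.
exact: nth_index.
Qed.

Lemma nth_plus m p lam i j l q : dominant m lam -> (i < m)%N -> (j < m)%N -> i != j ->
  (q < m)%N ->
  nth 0 (sref m p (RPlus i j) l (V m lam)) q =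
  if q == i then (l * p)%N%:Z - nth 0 (V m lam) j
  else if q == j then (l * p)%N%:Z - nth 0 (V m lam) i
  else nth 0 (V m lam) q.
Proof.
move=> d hi hj ne hq; rewrite nth_sref ?size_v // /= nth_mkseq //.
have [->|nqi] := eqVneq q i.
  by rewrite (negbTE ne) /=; lia.
have [->|nqj] := eqVneq q j => /=; lia.
Qed.

Lemma nth_long m p lam i l q : dominant m lam -> (i < m)%N -> (q < m)%N ->
  nth 0 (sref m p (RLong i) l (V m lam)) q =
  if q == i then 2 * (l * p)%N%:Z - nth 0 (V m lam) i
  else nth 0 (V m lam) q.
Proof.
move=> d hi hq; rewrite nth_sref ?size_v // /= nth_mkseq //.
have [->|nqi] := eqVneq q i => /=; lia.
Qed.

Lemma nth_minus m p lam i j l q : dominant m lam -> (i < m)%N -> (j < m)%N -> i != j ->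
  (q < m)%N ->
  nth 0 (sref m p (RMinus i j) l (V m lam)) q =
  if q == i then nth 0 (V m lam) j + (l * p)%N%:Z
  else if q == j then nth 0 (V m lam) i - (l * p)%N%:Z
  else nth 0 (V m lam) q.
Proof.
move=> d hi hj ne hq; rewrite nth_sref ?size_v // /= nth_mkseq //.
have [->|nqi] := eqVneq q i.
  by rewrite (negbTE ne) /=; lia.
have [->|nqj] := eqVneq q j => /=; lia.
Qed.

Ltac vlia := repeat match goal with H : context [nth _ _ _] |- _ => revert H end;
  cbn [pairc];
  repeat match goal with |- context [@nth ?T ?d ?s ?q] =>
    let x := fresh "x" in set x := @nth T d s q; clearbody x end; intros; lia.

Lemma G_minus m p lam nu i j l : (0 < p)%N -> pcore m p lam -> (i < j)%N -> (j < m)%N -> (1 <= l)%N ->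
  Gv m p lam nu (RMinus i j) l = 0.
Proof.
move=> p0 pc hij hj hl; have d := pc.1; have hi : (i < m)%N by lia.
rewrite /Gv /=; case: ifP => // /andP[c _]; apply: F_van => //.
have vj := v_pos d hj.
have {c} c : 0 < pairc (RMinus i j) (V m lam) - (l * p)%N%:Z := c.
move: c => /= c.
have hp : 0 < nth 0 (V m lam) i - (l * p)%N%:Z.
  vlia.
have [k [hk ek]] := core_idx pc hi hl hp.
have ne : i != j by rewrite neq_ltn hij.
have nkj : k != j by apply/eqP => e; move: ek; rewrite e; vlia.
have nki : k != i by apply/eqP => e; move: ek; rewrite e; vlia.
apply: (@vanv_rep _ j k); rewrite ?size_sref ?size_v // 1?eq_sym //.
rewrite !nth_minus // (negbTE nki) (negbTE nkj) eqxx (negbTE (_ : j != i)) ?ek //.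
by rewrite eq_sym.
Qed.

Lemma G_plus0 m p lam nu i j l : (0 < p)%N -> pcore m p lam -> (i < j)%N -> (j < m)%N ->
  (1 <= l)%N -> nth 0 (V m lam) j + (l * p)%N%:Z != nth 0 (V m lam) i ->
  Gv m p lam nu (RPlus i j) l = 0.
Proof.
move=> p0 pc hij hj hl hne; have d := pc.1; have hi : (i < m)%N by lia.
have ne : i != j by rewrite neq_ltn hij.
have nji : j != i by rewrite eq_sym.
rewrite /Gv; case: ifP => // /andP[c nR]; apply: F_van => //.
have vi := v_pos d hi; have vj := v_pos d hj.
have [hlt|hge] := boolP (nth 0 (V m lam) i < (l * p)%N%:Z).
  case hlen: (j < len lam)%N.
    move: nR => /negP nR; apply/negPn/negP => nv; apply: nR.
    apply/andP; split => //; apply/and5P; split => //; try vlia.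
    by rewrite vanE dot_eq.
  have tl := len_tail d hj (negbT hlen).
  have tj := tl j (leqnn j) hj.
  pose x := absz ((l * p)%N%:Z - nth (0:int) (V m lam) i).
  have hx : x%:Z = (l * p)%N%:Z - nth 0 (V m lam) i by rewrite /x; vlia.
  have hxj : (x < m - j)%N by move: c; rewrite /=; vlia.
  have hx0 : (0 < x)%N by vlia.
  pose k := (m - x)%N.
  have hk : (k < m)%N by rewrite /k; lia.
  have hjk : (j < k)%N by rewrite /k; lia.
  have tk := tl k (ltnW hjk) hk.
  have nki : k != i by rewrite neq_ltn (ltn_trans hij hjk) orbT.
  have nkj : k != j by rewrite neq_ltn hjk orbT.
  apply: (@vanv_rep _ j k); rewrite ?size_sref ?size_v // 1?eq_sym //.
  rewrite !nth_plus // (negbTE nki) (negbTE nkj) eqxx (negbTE nji) tk -hx /k.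
  by congr absz; lia.
have [heq|hgt] := boolP (nth 0 (V m lam) i == (l * p)%N%:Z).
  apply: (@vanv_zero _ j); rewrite ?size_sref ?size_v //.
  rewrite !nth_plus // (negbTE nji) eqxx; vlia.
have hp : 0 < nth 0 (V m lam) i - (l * p)%N%:Z by vlia.
have [k [hk ek]] := core_idx pc hi hl hp.
have nkj : k != j by apply/eqP => e; move: ek hne; rewrite e; vlia.
have nki : k != i by apply/eqP => e; move: ek; rewrite e; vlia.
apply: (@vanv_rep _ j k); rewrite ?size_sref ?size_v // 1?eq_sym //.
rewrite !nth_plus // (negbTE nki) (negbTE nkj) eqxx (negbTE nji) ek; vlia.
Qed.

Lemma G_plus_eq m p lam nu i j l : (0 < p)%N -> pcore m p lam -> (i < j)%N -> (j < m)%N ->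
  (1 <= l)%N -> nth 0 (V m lam) j + (l * p)%N%:Z = nth 0 (V m lam) i ->
  Gv m p lam nu (RPlus i j) l = - Fv m p lam nu (RLong i) l.
Proof.
move=> p0 pc hij hj hl he; have d := pc.1; have hi : (i < m)%N by lia.
have ne : i != j by rewrite neq_ltn hij.
have nji : j != i by rewrite eq_sym.
have vj := v_pos d hj.
rewrite /Gv; case: ifP => [_|].
  rewrite /Fv !chiE !dot_eq // -mulrN; congr (_ * _).
  apply: (@chiv_neg _ _ _ j); rewrite ?size_sref ?size_v //.
  - by rewrite nth_plus // nth_long // (negbTE nji) eqxx; vlia.
  - by rewrite nth_long // (negbTE nji).
  move=> q nqj; case: (ltnP q m) => hq; last first.
    by rewrite !nth_default ?size_sref ?size_v.
  rewrite nth_plus // nth_long // (negbTE nqj).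
  by case: (q == i) => //; vlia.
move/negbT; rewrite negb_and => /orP[h|]; first by exfalso; move: h; vlia.
rewrite negbK /inR => /andP[_ /and5P[_ _ _ h _]]; exfalso; move: h; vlia.
Qed.

Lemma G_long m p lam nu i l :
  Gv m p lam nu (RLong i) l =
  if 0 < nth 0 (V m lam) i - (l * p)%N%:Z then Fv m p lam nu (RLong i) l else 0.
Proof. by rewrite /Gv /inR andbT. Qed.

Lemma diff_sum (r : seq nat) (P Q : pred nat) (F : nat -> int) :
  \sum_(l <- r | P l && true) F l - \sum_(l <- r | P l && Q l) F l =
  \sum_(l <- r) (if P l && ~~ Q l then F l else 0).
Proof.
rewrite !(big_mkcond (fun l => P l && _)) -sumrB; apply: eq_bigr => l _.
by case: (P l); case: (Q l); rewrite /= ?subrr ?subr0 ?sub0r ?subrr.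
Qed.

Lemma sumG_zero m p lam nu : (0 < p)%N -> pcore m p lam ->
  \sum_(a <- posroots m) \sum_(1 <= l < (absz (pairc a (V m lam))).+1)
     Gv m p lam nu a l = 0.
Proof.
move=> p0 pc; have d := pc.1.
rewrite /posroots !big_cat !big_allpairs_dep big_map.
rewrite /=. rewrite [X in X + _]big1_seq ?add0r; last first.
  move=> i /andP[_]; rewrite mem_iota => /andP[_ hi].
  apply: big1_seq => j /andP[_]; rewrite mem_filter mem_iota => /andP[hij /andP[_ hj]].
  apply: big1_seq => l /andP[_]; rewrite mem_index_iota => /andP[hl _].
  exact: G_minus.
rewrite -big_split; apply: big1_seq => i /andP[_]; rewrite mem_iota => /andP[_ hi].
have vi := v_pos d hi.
have e1 : {in [seq j <- iota 0 m | (i < j)%N], forall j,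
   \sum_(1 <= l < (absz (pairc (RPlus i j) (V m lam))).+1) Gv m p lam nu (RPlus i j) l =
   \sum_(1 <= l < (absz (nth 0 (V m lam) i)).+1) Gv m p lam nu (RPlus i j) l}.
  move=> j; rewrite mem_filter mem_iota => /andP[hij /andP[_ hj]].
  have vj := v_pos d hj.
  rewrite (@big_cat_nat _ _ _ (absz (nth 0 (V m lam) i)).+1) //; last by vlia.
  rewrite /= [X in _ + X]big1_seq ?addr0 // => l /andP[_]; rewrite mem_index_iota => /andP[hl _].
  apply: G_plus0 => //; first lia.
  have lp : (l <= l * p)%N by rewrite leq_pmulr.
  by apply/negP => /eqP; vlia.
rewrite (eq_big_seq _ e1) exchange_big -big_split /=.
apply: big1_seq => l /andP[_]; rewrite mem_index_iota => /andP[hl _].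
rewrite G_long; case: ifP => hc.
  have [k [hk ek]] := core_idx pc hi hl hc.
  have hik : (i < k)%N by apply: (v_lt_idx d) => //; vlia.
  rewrite (bigD1_seq k) /=; first last.
  - exact/filter_uniq/iota_uniq.
  - by rewrite mem_filter mem_iota hik.
  rewrite big1_seq ?addr0; first by rewrite (G_plus_eq nu p0 pc hik hk hl) ?addNr //; vlia.
  move=> j /andP[njk]; rewrite mem_filter mem_iota => /andP[hij /andP[_ hj]].
  apply: G_plus0 => //; apply/negP => /eqP e; move/negP: njk; apply.
  apply/eqP; apply: (v_inj d hj hk); vlia.
rewrite big1_seq ?add0r // => j; rewrite mem_filter mem_iota => /andP[_ /andP[hij /andP[_ hj]]].
have vj := v_pos d hj.
apply: G_plus0 => //; apply/negP => /eqP e; move/negbT: hc; vlia.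
Qed.

Unset Implicit Arguments.
Theorem mainTheorem2 (p m : nat) (lam : weight) :
  prime p -> (2 < p)%N -> (1 <= m)%N -> pcore m p lam ->
  jsum m p (fun _ _ => true) lam = jsum m p (inR m p lam) lam.
Proof.
move=> pr p2 m1 pc; have p0 : (0 < p)%N by lia.
apply: functional_extensionality => nu; rewrite /jsum.
apply/eqP; rewrite -subr_eq0 -sumrB; apply/eqP.
transitivity (\sum_(a <- posroots m) \sum_(1 <= l < (absz (pairc a (V m lam))).+1)
   Gv m p lam nu a l); last exact: sumG_zero.
apply: eq_bigr => a _; exact: diff_sum.
Qed.
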